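(* Let $q$ be a prime power and $\mathcal{L}$ a non-empty set of lines of $\mathrm{PG}(n,q)$ satisfying (Pt), (Pl), (Sd) and (To) (see context). Let $M$ be a subspace of $\mathrm{PG}(n,q)$ and $\ell\in\mathcal{L}\setminus\mathcal{L}_M$. Let $$\mathcal{S}=\{\ell^M\in\mathcal{L}_M : \mathcal{L}_{\langle \ell^M,\ell\rangle}\cap\mathcal{L}_M=\{\ell^M\}\text{ and }\ell^M\cap\ell=\emptyset\}.$$ If $\ell^M_1\in\mathcal{S}$, then $\mathcal{L}_{\langle \ell^M_1,\ell\rangle}$ contains at least $q$ lines not in $\bigcup_{\ell^M_2\in\mathcal{S}\setminus\{\ell^M_1\}}\mathcal{L}_{\langle \ell^M_2,\ell\rangle}$.
   Context: (Pt): every point of $\mathrm{PG}(n,q)$ lies on $0$ or $q+1$ lines of $\mathcal{L}$. (Pl): every plane contains $0$, $1$ or $q+1$ lines of $\mathcal{L}$. (Sd): every solid ($3$-dimensional subspace) contains $0$, $1$, $q+1$ or $2q+1$ lines of $\mathcal{L}$. (To): $|\mathcal{L}|\le q^5+q^4+q^3+q^2+q+1$. For a subspace $W$, $\mathcal{L}_W$ denotes the set of lines of $\mathcal{L}$ contained in $W$; $\langle X,Y\rangle$ denotes the subspace spanned by $X$ and $Y$. *)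

(* Defs.v *)
(* PG(n,q) is modelled by the vector space 'rV[F]_(n.+1)
   over a finite field F with q = #|F| elements; subspaces of PG(n,q) are
   the subspaces {vspace 'rV[F]_n.+1} (projective dimension = \dim - 1):
   points have \dim 1, lines \dim 2, planes \dim 3, solids \dim 4. *)
From HB Require Import structures.
From mathcomp Require Import all_boot all_algebra.
Import VectorInternalTheory.

Set Implicit Arguments.
Unset Strict Implicit.
Unset Printing Implicit Defensive.

HB.instance Definition _ (F : finFieldType) (m : nat) :=
  [Countable of {vspace 'rV[F]_m} by <:].
HB.instance Definition _ (F : finFieldType) (m : nat) :=
  [Finite of {vspace 'rV[F]_m} by <:].

Notation PGsub F n := {vspace 'rV[F]_n.+1}.

Section PG.
Variables (F : finFieldType) (n : nat).
Local Notation q := #|F|.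
Implicit Types (L : {set PGsub F n}) (W : PGsub F n).

Definition LinW L W : {set PGsub F n} := [set x in L | (x <= W)%VS].

Definition all_lines L := forall l, l \in L -> \dim l = 2.

Definition cond_Pt L := forall P : PGsub F n, \dim P = 1 ->
  #|[set l in L | (P <= l)%VS]| = 0 \/ #|[set l in L | (P <= l)%VS]| = q.+1.
Definition cond_Pl L := forall W : PGsub F n, \dim W = 3 ->
  #|LinW L W| \in [:: 0; 1; q.+1].
Definition cond_Sd L := forall W : PGsub F n, \dim W = 4 ->
  #|LinW L W| \in [:: 0; 1; q.+1; (2 * q).+1].
Definition cond_To L := #|L| <= q ^ 5 + q ^ 4 + q ^ 3 + q ^ 2 + q + 1.

Definition Sset L (M l : PGsub F n) : {set PGsub F n} :=
  [set lM in LinW L M |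
     (LinW L (lM + l)%VS :&: LinW L M == [set lM]) && ((lM :&: l)%VS == 0%VS)].
End PG.

(* Main.v *)
Require Import Defs.
From HB Require Import structures.
From mathcomp Require Import all_boot all_algebra.
From mathcomp Require Import zify.

Set Implicit Arguments.
Unset Strict Implicit.
Unset Printing Implicit Defensive.

Section VS.
Variables (K : fieldType) (vT : vectType K).
Implicit Types U V W : {vspace vT}.

Lemma eq_dim_sub U V : (U <= V)%VS -> \dim V <= \dim U -> U = V.
Proof. by move=> h1 h2; apply/eqP; rewrite eqEdim h1 h2. Qed.

Lemma dim_sum_le U V : \dim (U + V) <= \dim U + \dim V.
Proof. by rewrite -dimv_sum_cap leq_addr. Qed.

Lemma dim_meet3 U V : \dim U = 2 -> \dim V = 2 -> (U :&: V != 0)%VS ->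
  U != V -> \dim (U + V) = 3.
Proof.
move=> dU dV ne UV; have := dimv_sum_cap U V; rewrite dU dV.
have h1 : 0 < \dim (U :&: V) by rewrite lt0n dimv_eq0.
have h2 : \dim (U :&: V) < 2.
  have hle : \dim (U :&: V) <= 2 by rewrite -dU dimvS ?capvSl.
  rewrite ltn_neqAle hle andbT.
  apply: contra UV => /eqP e.
  have e1 : (U :&: V)%VS = U by apply: eq_dim_sub; rewrite ?capvSl ?e ?dU.
  have UsV : (U <= V)%VS by rewrite -e1 capvSr.
  by rewrite (eq_dim_sub UsV) // dU dV.
lia.
Qed.

Lemma two_planes (P P' l x : {vspace vT}) : \dim P = 3 -> \dim P' = 3 -> P != P' ->
  \dim l = 2 -> \dim x = 2 -> (l <= P)%VS -> (l <= P')%VS ->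
  (x <= P)%VS -> (x <= P')%VS -> x = l.
Proof.
move=> dP dP' PP' dl dx lP lP' xP xP'.
have hle : \dim (P :&: P') <= 2.
  have := dimvS (capvSl P P'); rewrite dP leq_eqVlt => /orP [/eqP e|]; last by [].
  have e1 : (P :&: P')%VS = P by apply: eq_dim_sub; rewrite ?capvSl ?e ?dP.
  have PsP' : (P <= P')%VS by rewrite -e1 capvSr.
  by case/negP: PP'; rewrite (eq_dim_sub PsP') // dP dP'.
have lc : (l <= P :&: P')%VS by rewrite subv_cap lP lP'.
have xc : (x <= P :&: P')%VS by rewrite subv_cap xP xP'.
have el : l = (P :&: P')%VS by apply: eq_dim_sub; rewrite // dl.
have ex : x = (P :&: P')%VS by apply: eq_dim_sub; rewrite // dx.
by rewrite ex el.
Qed.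
End VS.

Lemma memLinW (F : finFieldType) (n : nat) (L : {set PGsub F n}) W x :
  (x \in LinW L W) = (x \in L) && (x <= W)%VS.
Proof. by rewrite inE. Qed.

Lemma ar1 q d c : c <= 1 -> 1 <= c -> 1 <= d ->
  [|| d + c == 0, d + c == 1, d + c == q.+1 | d + c == (2 * q).+1] -> q <= d.
Proof. by move=> h1 h2 h3 /or4P [] /eqP e; lia. Qed.
Lemma ar2 q d c : c <= q.+1 -> q.+2 <= d + c ->
  [|| d + c == 0, d + c == 1, d + c == q.+1 | d + c == (2 * q).+1] -> q <= d.
Proof. by move=> h1 h2 /or4P [] /eqP e; lia. Qed.
Lemma ar3 q N : (q.+1).*2 <= N ->
  [|| N == 0, N == 1, N == q.+1 | N == (2 * q).+1] -> False.
Proof. by move=> h1 /or4P [] /eqP e; lia. Qed.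
Lemma ar4 q a b i u v N : i <= 1 -> u = a + b - i -> v = true + u ->
  a = q.+1 -> b = q.+1 -> v <= N -> (q.+1).*2 <= N.
Proof. move=> *; lia. Qed.

Theorem lemma6 (F : finFieldType) (n : nat) (L : {set PGsub F n})
    (M l l1 : PGsub F n) :
  all_lines L -> L != set0 ->
  cond_Pt L -> cond_Pl L -> cond_Sd L -> cond_To L ->
  l \in L -> l \notin LinW L M ->
  l1 \in Sset L M l ->
  #|F| <= #|[set x in LinW L (l1 + l)%VS |
              [forall l2 in Sset L M l :\ l1, x \notin LinW L (l2 + l)%VS]]|.
Proof.
move=> Hlines _ _ HPl HSd _ lL lnM.
rewrite {1}/Sset inE => /andP [l1LM /andP [/eqP Hcap /eqP Hdisj]].
rewrite memLinW in l1LM; case/andP: l1LM => l1L l1M.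
set Sig := (l1 + l)%VS.
have dl := Hlines _ lL; have dl1 := Hlines _ l1L.
have dSig : \dim Sig = 4 by rewrite dimv_disjoint_sum // dl dl1.
have lSig : (l <= Sig)%VS by exact: addvSr.
have l1Sig : (l1 <= Sig)%VS by exact: addvSl.
pose P := [set y : PGsub F n | (y :&: l == 0)%VS].
pose D := LinW L Sig :&: P.
pose C := LinW L Sig :\: P.
suff: #|F| <= #|D|.
  move=> h; apply: (leq_trans h); apply: subset_leq_card; apply/subsetP => y.
  rewrite !inE => /andP [/andP [yL ySig] /eqP ydis].
  rewrite yL ySig /=; apply/forall_inP => l2.
  rewrite /Sset !inE => /andP [l2nl1 /andP [/andP [l2L l2M] _]].
  apply/negP => /andP [_ yl2].
  have dy := Hlines _ yL.
  have dyl : \dim (y + l) = 4 by rewrite dimv_disjoint_sum // dy dl.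
  have e1 : (y + l)%VS = (l2 + l)%VS.
    apply: eq_dim_sub; first by rewrite subv_add yl2 addvSr.
    by rewrite dyl; apply: leq_trans (dim_sum_le _ _) _; rewrite dl (Hlines _ l2L).
  have e2 : (y + l)%VS = Sig.
    by apply: eq_dim_sub; rewrite ?dyl ?dSig // subv_add ySig lSig.
  have : l2 \in [set l1].
    have l2S : (l2 <= Sig)%VS by rewrite -e2 e1 addvSl.
    by rewrite -Hcap !inE l2L l2M l2S.
  by rewrite inE (negbTE l2nl1).
have NDC : #|LinW L Sig| = #|D| + #|C| by rewrite cardsID.
have lC : l \in C by rewrite !inE lL lSig capvv -dimv_eq0 dl.
have l1D : l1 \in D by rewrite !inE l1L l1Sig Hdisj eqxx.
have C1 : 1 <= #|C| by rewrite card_gt0; apply/set0Pn; exists l.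
have plane : forall y, y \in C -> y != l ->
   [/\ \dim (y + l) = 3, #|LinW L (y + l)| = #|F|.+1,
       LinW L (y + l) \subset LinW L Sig & l1 \notin LinW L (y + l)].
  move=> y; rewrite !inE => /andP [ne /andP [yL ySig]] yl.
  have dy := Hlines _ yL.
  have d3 : \dim (y + l) = 3 by apply: dim_meet3.
  have ge2 : 2 <= #|LinW L (y + l)|.
    have := cards2 y l; rewrite yl => <-; rewrite subset_leq_card //; apply/subsetP => x.
    by rewrite !inE => /orP [] /eqP ->; rewrite ?yL ?lL ?addvSl ?addvSr.
  have hc := HPl _ d3; move: hc; rewrite !inE => /or3P [] /eqP e;
    try (rewrite e in ge2; by []).
  split => //.
    apply/subsetP => x; rewrite !inE => /andP [-> xyl] /=.
    by apply: subv_trans xyl _; rewrite subv_add ySig lSig.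
  rewrite l1L /=; apply/negP => l1yl.
  have : \dim Sig <= \dim (y + l) by apply: dimvS; rewrite subv_add l1yl addvSr.
  by rewrite dSig d3.
have big1 : forall y, y \in C -> y != l -> #|F|.+2 <= #|LinW L Sig|.
  move=> y yC yl; case: (plane y yC yl) => _ c sub nl1.
  have := cardsU1 l1 (LinW L (y + l)); rewrite nl1 c => h.
  have : #|l1 |: LinW L (y + l)| <= #|LinW L Sig|.
    by rewrite subset_leq_card // subUset sub1set !inE l1L l1Sig sub.
  by rewrite h add1n.
have HS := HSd _ dSig; move: HS; rewrite !inE NDC.
have D1 : 1 <= #|D| by rewrite card_gt0; apply/set0Pn; exists l1.
case: (boolP (C \subset [set l])) => [Cl|].
  have := subset_leq_card Cl; rewrite cards1 => Cle.
  exact: ar1.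
case/subsetPn => y yC; rewrite inE => yl.
have := big1 y yC yl; rewrite NDC.
case: (plane y yC yl) => d3 c sub nl1.
case: (boolP (C \subset LinW L (y + l))) => [CP|].
  have := subset_leq_card CP; rewrite c => Cle.
  exact: ar2.
case/subsetPn => y' y'C y'nP.
have y'l : y' != l.
  by apply: contraNneq y'nP => ->; rewrite !inE lL addvSr.
case: (plane y' y'C y'l) => d3' c' sub' nl1'.
have : (#|F|.+1).*2 <= #|LinW L Sig|.
  have hI : #|LinW L (y + l) :&: LinW L (y' + l)| <= 1.
    rewrite -[X in _ <= X](cards1 l) subset_leq_card //; apply/subsetP => x.
    rewrite !inE => /andP [/andP [xL xP] /andP [_ xP']].
    apply/eqP; apply: (two_planes d3 d3' _ dl (Hlines _ xL)) => //;
      rewrite ?addvSr //.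
    apply: contra y'nP => /eqP ->.
    by move: y'C; rewrite !inE => /andP [_ /andP [-> _]]; rewrite addvSl.
  have hU := cardsU (LinW L (y + l)) (LinW L (y' + l)).
  have nl1U : l1 \notin LinW L (y + l) :|: LinW L (y' + l)
    by rewrite in_setU negb_or nl1 nl1'.
  have := cardsU1 l1 (LinW L (y + l) :|: LinW L (y' + l)); rewrite nl1U => hU1.
  have : #|l1 |: (LinW L (y + l) :|: LinW L (y' + l))| <= #|LinW L Sig|.
    by rewrite subset_leq_card // subUset sub1set !inE l1L l1Sig subUset sub sub'.
  exact: ar4 hI hU hU1 c c'.
rewrite NDC => h1 _ h2; case: (ar3 h1 h2).
Qed.
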